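(* The five families of test equations for polycyclic presentations are irredundant: for each $t\in\{1,2,3,4,5\}$ there exists a polycyclic presentation for which some test equation of type (T$t$) fails while all test equations of the other four types hold, where the types are (T1) $c(g_j\,g^{a_{j,k}}\,g_i)=c(g_kg_jg_i)$ for $k>j>i$; (T2) $c(g_j^{r_j}g_i)=c(g^{e_j}g_i)$ for $r_j<\infty$, $j>i$; (T3) $c(g_jg_i^{r_i})=c(g_j\,g^{e_i})$ for $r_i<\infty$, $j>i$; (T4) $c(g_jg_i^{-1}g_i)=c(g_j)$ for $r_i=\infty$, $j>i$; (T5) $c(g_i^{r_i+1})=c(g_i\,g^{e_i})$ for $r_i<\infty$. In particular, no proper subset of these families suffices to detect inconsistency in general.
   Context: A polycyclic presentation $\mathcal P$ on generators $g_1,\ldots,g_n$ consists of $r_1,\ldots,r_n\in\mathbb N\cup\{\infty\}$ and integers $e_{i,k},a_{i,j,k},b_{i,j,k}$ ($1\le i<j\le n$, $1\le k\le n$) with $0\le e_{i,k},a_{i,j,k},b_{i,j,k}<r_k$ whenever $r_k<\infty$, and has defining relations $g_i^{r_i}=g^{e_i}$ (for $r_i<\infty$), $g_jg_i=g_ig^{a_{i,j}}$ (for $i<j$), $g_jg_i^{-1}=g_i^{-1}g^{b_{i,j}}$ (for $i<j$, $r_i=\infty$), where $g^{e_i}=g_{i+1}^{e_{i,i+1}}\cdots g_n^{e_{i,n}}$, $g^{a_{i,j}}=g_{i+1}^{a_{i,j,i+1}}\cdots g_n^{a_{i,j,n}}$, $g^{b_{i,j}}=g_{i+1}^{b_{i,j,i+1}}\cdots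 g_n^{b_{i,j,n}}$ (with $g_k^x$ for $x<0$ meaning $(g_k^{-1})^{|x|}$). From the presentation one computes integers $c_{i,j,k},d_{i,j,k},f_{i,k}$ (in $[0,r_k)$ when $r_k<\infty$) such that in the presented group $g_j^{-1}g_i=g_ig^{c_{i,j}}$ ($i<j$, $r_j=\infty$), $g_j^{-1}g_i^{-1}=g_i^{-1}g^{d_{i,j}}$ ($i<j$, $r_i=r_j=\infty$), $g_i^{-1}=g_i^{r_i-1}g^{f_i}$ ($r_i<\infty$). Let $M$ be the free monoid on $\{g_1^{\pm1},\ldots,g_n^{\pm1}\}$. A collection step replaces a subword equal to the left-hand side of one of these six kinds of relations by its right-hand side, or deletes $g_ig_i^{-1}$ or $g_i^{-1}g_i$; a word admitting no step is reduced. The collection-to-the-left algorithm applies steps, always choosing the leftmost occurrence of a non-reduced subword involving a generator of smallest index (lower index has priority), until the word is reduced; $c\colon M\to M$ maps a word to the result. A presentation is consistent if every element of the presented group is represented by exactly one reduced word. *)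

(* Defs.v *)
From Stdlib Require Import ZArith List Arith Bool.
Import ListNotations.
Open Scope nat_scope.

(* Generators are indexed 0 .. n-1 (paper: 1 .. n). *)
Record pcp := Pcp {
  pn : nat;
  pr : nat -> option nat;            (* relative orders: None = infinity *)
  pe : nat -> nat -> Z;              (* pe i k = e_{i,k} *)
  pa : nat -> nat -> nat -> Z;       (* pa i j k = a_{i,j,k} *)
  pb : nat -> nat -> nat -> Z        (* pb i j k = b_{i,j,k} *)
}.

Definition is_inf (P : pcp) (i : nat) : bool :=
  match pr P i with None => true | Some _ => false end.

Definition fin_range (P : pcp) (k : nat) (x : Z) : Prop :=
  match pr P k with Some m => (0 <= x < Z.of_nat m)%Z | None => True end.

Definition pcp_wf (P : pcp) : Prop :=
  (forall i m, i < pn P -> pr P i = Some m -> 0 < m) /\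
  (forall i k, i < k < pn P -> fin_range P k (pe P i k)) /\
  (forall i j k, i < j < pn P -> i < k < pn P ->
      fin_range P k (pa P i j k) /\ fin_range P k (pb P i j k)).

Inductive letter := Pos (i : nat) | Neg (i : nat).
Definition letter_eq_dec (x y : letter) : {x = y} + {x <> y}.
Proof. decide equality; apply Nat.eq_dec. Defined.
Definition word := list letter.

Definition inv_letter (x : letter) : letter :=
  match x with Pos i => Neg i | Neg i => Pos i end.
Definition inv_word (w : word) : word := rev (map inv_letter w).

Definition gen_pow (k : nat) (x : Z) : word :=
  if (0 <=? x)%Z then repeat (Pos k) (Z.to_nat x)
  else repeat (Neg k) (Z.to_nat (- x)).

(* g^v = g_{i+1}^{v_{i+1}} ... g_n^{v_n} *)
Definition gvec (P : pcp) (i : nat) (v : nat -> Z) : word :=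
  flat_map (fun k => gen_pow k (v k)) (seq (S i) (pn P - S i)).

(* A candidate rewriting at the head of a word:
   (smallest generator index involved, length of the left-hand side, right-hand side).
   C i j = c_{i,j}, D i j = d_{i,j}, F i = f_i. Candidates are listed in priority order
   (free cancellations first). *)
Definition cand := (nat * nat * word)%type.

Definition head_cands (P : pcp) (C D : nat -> nat -> nat -> Z) (F : nat -> nat -> Z)
  (w : word) : list cand :=
  match w with
  | [] => []
  | x :: w' =>
    let two :=
      match w' with
      | [] => []
      | y :: _ =>
        match x, y with
        | Pos j, Neg i =>
            if j =? i then [(i, 2, [])]
            else if (i <? j) && is_inf P i then [(i, 2, Neg i :: gvec P i (pb P i j))]
            else []
        | Neg j, Pos i =>
            if j =? i then [(i, 2, [])]
            else if (i <? j) && is_inf P j then [(i, 2, Pos i :: gvec P i (C i j))]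
            else []
        | Pos j, Pos i =>
            if i <? j then [(i, 2, Pos i :: gvec P i (pa P i j))] else []
        | Neg j, Neg i =>
            if (i <? j) && is_inf P i && is_inf P j
            then [(i, 2, Neg i :: gvec P i (D i j))] else []
        end
      end in
    let one :=
      match x with
      | Pos i =>
          match pr P i with
          | Some m => if list_eq_dec letter_eq_dec (firstn m w) (repeat (Pos i) m)
                      then [(i, m, gvec P i (pe P i))] else []
          | None => []
          end
      | Neg i =>
          match pr P i with
          | Some m => [(i, 1, repeat (Pos i) (m - 1) ++ gvec P i (F i))]
          | None => []
          end
      end in
    two ++ one
  end.

(* all candidates: (index, position, length, rhs) *)
Fixpoint cands P C D F (w : word) (p : nat) : list (nat * nat * nat * word) :=
  match w with
  | [] => []
  | _ :: w' => map (fun '(i, l, r) => (i, p, l, r)) (head_cands P C D F w)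
               ++ cands P C D F w' (S p)
  end.

(* smallest generator index first, then leftmost, then priority *)
Fixpoint best (l : list (nat * nat * nat * word)) : option (nat * nat * nat * word) :=
  match l with
  | [] => None
  | q :: l' =>
    match best l' with
    | None => Some q
    | Some q' => let '(i, _, _, _) := q in let '(i', _, _, _) := q' in
                 if i' <? i then Some q' else Some q
    end
  end.

Definition step P C D F (w : word) : option word :=
  match best (cands P C D F w 0) with
  | None => None
  | Some (_, p, l, rhs) => Some (firstn p w ++ rhs ++ skipn (p + l) w)
  end.

Definition reduced P C D F (w : word) : Prop := step P C D F w = None.

Fixpoint run P C D F (fuel : nat) (w : word) : option word :=
  match fuel with
  | 0 => None
  | S k => match step P C D F w with
           | None => Some w
           | Some w2 => run P C D F k w2
           end
  end.

(* c(w) = w' : collection to the left terminates on w with result w' *)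
Definition collects P C D F (w w' : word) : Prop :=
  exists fuel, run P C D F fuel w = Some w'.

(* c_{i,j}, d_{i,j}, f_i as computed from the presentation by collection:
   g^{c_{i,j}} = c((g^{a_{i,j}})^{-1}), g^{d_{i,j}} = c((g^{b_{i,j}})^{-1}),
   g^{f_i} = c((g^{e_i})^{-1}). *)
Definition derived (P : pcp) C D F : Prop :=
  (forall i j, i < j < pn P -> pr P j = None ->
     collects P C D F (inv_word (gvec P i (pa P i j))) (gvec P i (C i j)) /\
     (forall k, i < k < pn P -> fin_range P k (C i j k))) /\
  (forall i j, i < j < pn P -> pr P i = None -> pr P j = None ->
     collects P C D F (inv_word (gvec P i (pb P i j))) (gvec P i (D i j)) /\
     (forall k, i < k < pn P -> fin_range P k (D i j k))) /\
  (forall i m, i < pn P -> pr P i = Some m ->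
     collects P C D F (inv_word (gvec P i (pe P i))) (gvec P i (F i)) /\
     (forall k, i < k < pn P -> fin_range P k (F i k))).

Definition test_eq (P : pcp) (t : nat) (u v : word) : Prop :=
  match t with
  | 1 => exists i j k, i < j /\ j < k /\ k < pn P /\
           u = Pos j :: gvec P j (pa P j k) ++ [Pos i] /\ v = [Pos k; Pos j; Pos i]
  | 2 => exists i j m, i < j < pn P /\ pr P j = Some m /\
           u = repeat (Pos j) m ++ [Pos i] /\ v = gvec P j (pe P j) ++ [Pos i]
  | 3 => exists i j m, i < j < pn P /\ pr P i = Some m /\
           u = Pos j :: repeat (Pos i) m /\ v = Pos j :: gvec P i (pe P i)
  | 4 => exists i j, i < j < pn P /\ pr P i = None /\
           u = [Pos j; Neg i; Pos i] /\ v = [Pos j]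
  | 5 => exists i m, i < pn P /\ pr P i = Some m /\
           u = repeat (Pos i) (m + 1) /\ v = Pos i :: gvec P i (pe P i)
  | _ => False
  end.

Definition eq_holds P C D F (u v : word) : Prop :=
  exists w, collects P C D F u w /\ collects P C D F v w.

Definition eq_fails P C D F (u v : word) : Prop :=
  exists w1 w2, collects P C D F u w1 /\ collects P C D F v w2 /\ w1 <> w2.

(* Main.v *)
Require Import Defs.
From Stdlib Require Import ZArith List Arith Lia.
Import ListNotations.

Definition lk (l : list (nat * Z)) (k : nat) : Z :=
  match find (fun p => Nat.eqb (fst p) k) l with Some p => snd p | None => 0%Z end.
Definition lk1 (l : list (nat * list (nat * Z))) (i : nat) : nat -> Z :=
  match find (fun p => Nat.eqb (fst p) i) l with Some p => lk (snd p) | None => fun _ => 0%Z end.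
Definition lk2 (l : list (nat * nat * list (nat * Z))) (i j : nat) : nat -> Z :=
  match find (fun p => andb (Nat.eqb (fst (fst p)) i) (Nat.eqb (snd (fst p)) j)) l with
  | Some p => lk (snd p) | None => fun _ => 0%Z end.

Definition mk (n : nat) (r : list (option nat)) e a b :=
  Pcp n (fun i => nth i r None) (lk1 e) (lk2 a) (lk2 b).

Definition fin_rangeb (P : pcp) (k : nat) (x : Z) : bool :=
  match pr P k with Some m => (0 <=? x)%Z && (x <? Z.of_nat m)%Z | None => true end.

Lemma frb_ok P k x : fin_rangeb P k x = true -> fin_range P k x.
Proof.
  unfold fin_rangeb, fin_range. destruct (pr P k); [|auto].
  intro H. apply andb_prop in H. destruct H as [H1 H2].
  apply Z.leb_le in H1. apply Z.ltb_lt in H2. lia.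
Qed.

Definition chk P C D F N (u v : word) : bool :=
  match run P C D F N u, run P C D F N v with
  | Some a, Some b => if list_eq_dec letter_eq_dec a b then true else false
  | _, _ => false end.

Lemma holds_of P C D F N u v : chk P C D F N u v = true -> eq_holds P C D F u v.
Proof.
  unfold chk, eq_holds, collects.
  destruct (run P C D F N u) as [l|] eqn:E1; destruct (run P C D F N v) as [l0|] eqn:E2; try discriminate.
  destruct (list_eq_dec letter_eq_dec l l0); try discriminate. subst.
  intros _. exists l0. split; exists N; auto.
Qed.

Definition chkf P C D F N (u v : word) : bool :=
  match run P C D F N u, run P C D F N v with
  | Some a, Some b => if list_eq_dec letter_eq_dec a b then false else true
  | _, _ => false end.

Lemma fails_of P C D F N u v : chkf P C D F N u v = true -> eq_fails P C D F u v.
Proof.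
  unfold chkf, eq_fails, collects.
  destruct (run P C D F N u) as [l|] eqn:E1; destruct (run P C D F N v) as [l0|] eqn:E2; try discriminate.
  destruct (list_eq_dec letter_eq_dec l l0); try discriminate.
  intros _. exists l, l0. split; [exists N; auto|split; [exists N; auto|auto]].
Qed.

Lemma coll_of P C D F N u v : run P C D F N u = Some v -> collects P C D F u v.
Proof. intro H. exists N. exact H. Qed.

Ltac cases :=
  repeat match goal with
  | H : _ /\ _ |- _ => destruct H
  | H : ?x < ?n |- _ => is_var x;
      let y := fresh in assert (y : x < 4) by lia; clear y;
      destruct x as [|[|[|[|x]]]]; try (exfalso; lia)
  end.

Ltac fixpr :=
  repeat match goal with
  | H : pr _ _ = Some _ |- _ => vm_compute in H;
      first [discriminate H | injection H; clear H; intro; subst]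
  | H : pr _ _ = None |- _ => vm_compute in H;
      first [discriminate H | clear H]
  end.

Ltac destr :=
  repeat match goal with
  | H : exists _, _ |- _ => destruct H
  | H : _ /\ _ |- _ => destruct H
  end.

Ltac solve_ex nn :=
  split; [split; [|split]|split; [split;[|split]|split]];
  [ intros; change (pn _) with nn in *; cases; fixpr; lia
  | intros; change (pn _) with nn in *; cases; apply frb_ok; vm_compute; reflexivity
  | intros; change (pn _) with nn in *; cases; (split; apply frb_ok); vm_compute; reflexivity
  | intros; change (pn _) with nn in *; cases; fixpr; (split;
      [apply (coll_of _ _ _ _ 1000); vm_compute; reflexivity
      | intros; cases; apply frb_ok; vm_compute; reflexivity])
  | intros; change (pn _) with nn in *; cases; fixpr; (split;
      [apply (coll_of _ _ _ _ 1000); vm_compute; reflexivity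
      | intros; cases; apply frb_ok; vm_compute; reflexivity])
  | intros; change (pn _) with nn in *; cases; fixpr; (split;
      [apply (coll_of _ _ _ _ 1000); vm_compute; reflexivity
      | intros; cases; apply frb_ok; vm_compute; reflexivity])
  | idtac
  | intros t' u v Ht Hne Hte;
    destruct t' as [|[|[|[|[|[|t']]]]]]; try (exfalso; lia); cbn [test_eq] in Hte;
    destr; subst u v; change (pn _) with nn in *; cases; fixpr;
    apply (holds_of _ _ _ _ 1000); vm_compute; reflexivity ].

Definition P4 := mk 2 [None; Some 2] [] [(0,1,[(1,1%Z)])] [].
Definition C0 : nat -> nat -> nat -> Z := fun _ _ _ => 0%Z.
Definition F0 : nat -> nat -> Z := fun _ _ => 0%Z.

Lemma ex4 : pcp_wf P4 /\ derived P4 C0 C0 F0 /\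
    (exists u v, test_eq P4 4 u v /\ eq_fails P4 C0 C0 F0 u v) /\
    (forall t' u v, 1 <= t' <= 5 -> t' <> 4 -> test_eq P4 t' u v ->
       eq_holds P4 C0 C0 F0 u v).
Proof.
  solve_ex 2.
  exists [Pos 1; Neg 0; Pos 0], [Pos 1]. split.
  - exists 0, 1. vm_compute. repeat split; auto.
  - apply (fails_of _ _ _ _ 1000). vm_compute. reflexivity.
Qed.

Definition P3 := mk 2 [Some 2; None] [] [(0,1,[(1,2%Z)])] [].
Definition C3 := lk2 [(0,1,[(1,(-2)%Z)])].
Lemma ex3 : pcp_wf P3 /\ derived P3 C3 C0 F0 /\
    (exists u v, test_eq P3 3 u v /\ eq_fails P3 C3 C0 F0 u v) /\
    (forall t' u v, 1 <= t' <= 5 -> t' <> 3 -> test_eq P3 t' u v ->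
       eq_holds P3 C3 C0 F0 u v).
Proof.
  solve_ex 2.
  exists (Pos 1 :: repeat (Pos 0) 2), (Pos 1 :: gvec P3 0 (pe P3 0)). split.
  - exists 0, 1, 2. vm_compute. repeat split; auto.
  - apply (fails_of _ _ _ _ 1000). vm_compute. reflexivity.
Qed.

Definition P5 := mk 2 [Some 2; Some 3] [(0,[(1,1%Z)])] [(0,1,[(1,2%Z)])] [].
Definition F5 := lk1 [(0,[(1,2%Z)])].
Lemma ex5 : pcp_wf P5 /\ derived P5 C0 C0 F5 /\
    (exists u v, test_eq P5 5 u v /\ eq_fails P5 C0 C0 F5 u v) /\
    (forall t' u v, 1 <= t' <= 5 -> t' <> 5 -> test_eq P5 t' u v ->
       eq_holds P5 C0 C0 F5 u v).
Proof.
  solve_ex 2.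
  exists (repeat (Pos 0) (2 + 1)), (Pos 0 :: gvec P5 0 (pe P5 0)). split.
  - exists 0, 2. vm_compute. repeat split; auto.
  - apply (fails_of _ _ _ _ 1000). vm_compute. reflexivity.
Qed.

Definition P2 := mk 3 [Some 2; Some 2; Some 2] [(1,[(2,1%Z)])]
  [(0,1,[(2,1%Z)]); (0,2,[(1,1%Z)]); (1,2,[(2,1%Z)])] [].
Definition F2 := lk1 [(1,[(2,1%Z)])].
Lemma ex2 : pcp_wf P2 /\ derived P2 C0 C0 F2 /\
    (exists u v, test_eq P2 2 u v /\ eq_fails P2 C0 C0 F2 u v) /\
    (forall t' u v, 1 <= t' <= 5 -> t' <> 2 -> test_eq P2 t' u v ->
       eq_holds P2 C0 C0 F2 u v).
Proof.
  solve_ex 3.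
  exists (repeat (Pos 1) 2 ++ [Pos 0]), (gvec P2 1 (pe P2 1) ++ [Pos 0]). split.
  - exists 0, 1, 2. vm_compute. repeat split; auto.
  - apply (fails_of _ _ _ _ 1000). vm_compute. reflexivity.
Qed.

Definition P1 := mk 4 [Some 2; Some 3; Some 3; Some 3] []
  [(1,2,[(2,1%Z);(3,1%Z)]); (1,3,[(3,1%Z)]); (2,3,[(3,1%Z)]);
   (0,1,[(2,1%Z)]); (0,2,[(1,1%Z)]); (0,3,[(3,1%Z)])] [].
Lemma ex1 : pcp_wf P1 /\ derived P1 C0 C0 F0 /\
    (exists u v, test_eq P1 1 u v /\ eq_fails P1 C0 C0 F0 u v) /\
    (forall t' u v, 1 <= t' <= 5 -> t' <> 1 -> test_eq P1 t' u v ->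
       eq_holds P1 C0 C0 F0 u v).
Proof.
  solve_ex 4.
  exists (Pos 1 :: gvec P1 1 (pa P1 1 2) ++ [Pos 0]), [Pos 2; Pos 1; Pos 0]. split.
  - exists 0, 1, 2. vm_compute. repeat split; auto.
  - apply (fails_of _ _ _ _ 1000). vm_compute. reflexivity.
Qed.

Theorem proposition18 :
  forall t : nat, 1 <= t <= 5 ->
  exists (P : pcp) (C D : nat -> nat -> nat -> Z) (F : nat -> nat -> Z),
    pcp_wf P /\ derived P C D F /\
    (exists u v, test_eq P t u v /\ eq_fails P C D F u v) /\
    (forall t' u v, 1 <= t' <= 5 -> t' <> t -> test_eq P t' u v ->
       eq_holds P C D F u v).
Proof.
  intros t Ht.
  destruct t as [|[|[|[|[|[|t]]]]]]; try (exfalso; lia).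
  - exists P1, C0, C0, F0. exact ex1.
  - exists P2, C0, C0, F2. exact ex2.
  - exists P3, C3, C0, F0. exact ex3.
  - exists P4, C0, C0, F0. exact ex4.
  - exists P5, C0, C0, F5. exact ex5.
Qed.
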